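(* Let $p$ be an SCF rationalizable within the class of Fechnerian RUMs, and let $x,y\in X$. If $(x,y)\in T(R^s\cup R^f)$, then every Fechnerian RUM $(u,g)$ rationalizing $p$ satisfies $u(x)\geq u(y)$. If $(x,y)\in T_P(R^s\cup R^f)$, then every such model satisfies $u(x)>u(y)$.
   Context: $X$ is a finite set of options; $C=\{(x,y): x,y\in X,\ x\neq y\}$; $D\subseteq C$ is a fixed non-empty set with $(x,y)\in D\Rightarrow (y,x)\in D$. An SCF $p$ assigns to each $(x,y)\in D$ a number $p(x,y)>0$ with $p(x,y)+p(y,x)=1$. A RUM is a pair $(u,g)$ with $u:X\to\mathbb{R}$ and $g$ assigning to each $(x,y)\in C$ a density $g(x,y)$ on $\mathbb{R}$ (cdf $G(x,y)$) with $\int v\,g(x,y)(v)\,dv=u(x)-u(y)=:v(x,y)$, $g(x,y)(v)=g(y,x)(-v)$ for all $v$, and connected support. It rationalizes $p$ if $G(x,y)(0)=p(y,x)$ for all $(x,y)\in D$. A RUM is Fechnerian if there is a density $g$ on $\mathbb{R}$ with $g(\delta)=g(-\delta)>0$ for all $\delta\geq0$ such that $g(x,y)(v)=g(v-v(x,y))$ for all $(x,y)\in C$, $v\in\mathbb{R}$. Relations on $X$: $(x,y)\in R^s$ iff $x=y$, or $(x,y)\in D$ and $p(x,y)\geq p(y,x)$; $(x,y)\in R^f$ iff $(x,y)\in C\setminus D$ and there exists $z\in X$ with $(x,z),(y,z)\in D$ and $p(x,z)\geq p(y,z)$. For a binary relation $R$, $T(R)$ is its transitive closure ($(x,y)\in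 T(R)$ iff there is a sequence $x_1=x,\dots,x_n=y$, $n\geq2$, with consecutive pairs in $R$) and $T_P(R)$ the asymmetric part of $T(R)$. *)

(* Defs.v *)
From HB Require Import structures.
From mathcomp Require Import all_boot all_order all_algebra.
From mathcomp Require Import all_classical all_reals all_analysis.
From Stdlib Require Import Relations.
Set Implicit Arguments. Unset Strict Implicit. Unset Printing Implicit Defensive.
Import Order.TTheory GRing.Theory Num.Theory.
Import numFieldNormedType.Exports.
Local Open Scope classical_set_scope.
Local Open Scope ring_scope.

Section Defs.
Context {R : realType} {X : finType}.

Notation leb := (@lebesgue_measure R).

Definition inC (x y : X) : Prop := x <> y.

Definition valid_domain (D : {set X * X}) : Prop :=
  [/\ (forall x y, (x, y) \in D -> x <> y),
      (exists x y, (x, y) \in D) &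
      (forall x y, (x, y) \in D -> (y, x) \in D)].

(* stochastic choice function on D (values outside D are irrelevant) *)
Definition is_SCF (D : {set X * X}) (p : X -> X -> R) : Prop :=
  forall x y, (x, y) \in D -> 0 < p x y /\ p x y + p y x = 1.

Definition is_density (f : R -> R) : Prop :=
  [/\ measurable_fun setT f,
      (forall v, 0 <= f v) &
      (\int[leb]_v (f v)%:E = 1)%E].

Definition cdf (f : R -> R) (t : R) : \bar R :=
  (\int[leb]_(v in `]-oo, t]) (f v)%:E)%E.

Definition dsupport (f : R -> R) : set R := closure [set v | 0 < f v].

Definition vdiff (u : X -> R) (x y : X) : R := u x - u y.

Definition is_RUM (u : X -> R) (g : X -> X -> R -> R) : Prop :=
  forall x y, inC x y ->
  [/\ is_density (g x y),
      leb.-integrable setT (fun v => (v * g x y v)%:E),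
      (\int[leb]_v (v * g x y v)%:E = (vdiff u x y)%:E)%E,
      (forall v, g x y v = g y x (- v)) &
      connected (dsupport (g x y))].

Definition rationalizes (D : {set X * X}) (u : X -> R) (g : X -> X -> R -> R)
  (p : X -> X -> R) : Prop :=
  is_RUM u g /\ forall x y, (x, y) \in D -> cdf (g x y) 0 = (p y x)%:E.

Definition is_Fechnerian (u : X -> R) (g : X -> X -> R -> R) : Prop :=
  is_RUM u g /\
  exists g0 : R -> R,
    [/\ is_density g0,
        (forall d, 0 <= d -> g0 d = g0 (- d) /\ 0 < g0 d) &
        (forall x y, inC x y -> forall v, g x y v = g0 (v - vdiff u x y))].

Definition Fechner_rationalizable (D : {set X * X}) (p : X -> X -> R) : Prop :=
  exists u g, is_Fechnerian u g /\ rationalizes D u g p.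

Definition Rs (D : {set X * X}) (p : X -> X -> R) (x y : X) : Prop :=
  x = y \/ ((x, y) \in D /\ p y x <= p x y).

Definition Rf (D : {set X * X}) (p : X -> X -> R) (x y : X) : Prop :=
  (inC x y /\ (x, y) \notin D) /\
  exists z, [/\ (x, z) \in D, (y, z) \in D & p y z <= p x z].

Definition RsRf D p : relation X := fun x y => Rs D p x y \/ Rf D p x y.

Definition TC (Q : relation X) : relation X := clos_trans X Q.
Definition TP (Q : relation X) : relation X := fun x y => TC Q x y /\ ~ TC Q y x.

End Defs.

(* Main.v *)
Require Import Defs.
From HB Require Import structures.
From mathcomp Require Import all_boot all_order all_algebra.
From mathcomp Require Import all_classical all_reals all_analysis.
From mathcomp Require Import measurable_realfun.
From mathcomp Require Import lra.
From Stdlib Require Import Relations.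
Import Order.TTheory GRing.Theory Num.Theory.
Import numFieldNormedType.Exports.
Local Open Scope classical_set_scope.
Local Open Scope ring_scope.

Section S.
Context {R : realType}.
Local Notation mu := (@lebesgue_measure R).

Lemma cdf_strict (g0 : R -> R) : is_density g0 -> (forall v, 0 < g0 v) ->
  forall s t, s < t -> (Defs.cdf g0 s < Defs.cdf g0 t)%E.
Proof.
move=> [mg g0ge0 int1] gpos s t st.
have mE : measurable_fun setT (EFin \o g0) by exact/measurable_EFinP.
have eqU : `]-oo, t]%classic = `]-oo, s]%classic `|` `]s, t]%classic.
  apply/seteqP; split => x /=; rewrite !in_itv/=.
    by move=> xt; case: (leP x s) => xs; [left|right; rewrite xt].
  by case=> [xs|/andP[_ ->]] //; exact: (le_trans xs (ltW st)).
rewrite /Defs.cdf eqU ge0_integral_setU//=; last 3 first.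
- exact: measurable_funS mE.
- by move=> x _; rewrite lee_fin.
- apply/disj_setPS => x /= [] ; rewrite !in_itv/= => xs /andP[sx _].
  by move: (lt_le_trans sx xs); rewrite ltxx.
rewrite lteDl.
  rewrite lt0e; apply/andP; split; last by apply: integral_ge0 => x _; rewrite lee_fin.
  apply/eqP => I0.
  have : (\int[mu]_(x in `]s, t]) `|(g0 x)%:E| = 0)%E.
    by rewrite -I0; apply: eq_integral => x _; rewrite abse_EFin ger0_norm.
  move/(ae_eq_integral_abs _ _ _).
  case => //.
  - exact: measurable_funS mE.
  move=> N [mN N0 sub].
  have : (mu `]s, t]%classic <= mu N)%E.
    apply: le_measure; rewrite ?inE//.
    move=> x xst; apply: sub => /= /(_ xst) /eqP.
    by rewrite /cst eqe gt_eqF.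
  by rewrite N0 lebesgue_measure_itv/= lte_fin st -EFinD lee_fin subr_le0 leNgt st.
rewrite ge0_fin_numE; last by apply: integral_ge0 => x _; rewrite lee_fin.
apply: (@le_lt_trans _ _ 1%E); last by rewrite ltey.
rewrite -int1; apply: ge0_subset_integral => //.
by move=> x _; rewrite lee_fin.
Qed.
Lemma lebesgue_measure_shift (e : R) (A : set (measurableTypeR R)) : measurable A ->
  pushforward mu ((fun x : R => x + e) : measurableTypeR R -> measurableTypeR R) A = mu A.
Proof.
move=> mA; apply/esym.
unshelve eapply (lebesgue_measure_unique (mu := pushforward mu ((fun x : R => x + e) : measurableTypeR R -> measurableTypeR R))).
- by apply: measurable_realfun.measurable_funD.
- move=> _ [[a b]] _ <-; rewrite /pushforward /=.
  transitivity (mu `](a - e), (b - e)]%classic); last first.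
    congr (mu _); apply/seteqP; split => x /=; rewrite !in_itv/= ltrBlDr lerBrDr //.
  rewrite !lebesgue_measure_itv/= !lte_fin ltrD2r.
  by case: ifP => // _; rewrite -!EFinD opprB addrA subrK.
- exact: mA.
Qed.

Lemma cdf_shift (g0 : R -> R) (d : R) : is_density g0 ->
  Defs.cdf (fun v => g0 (v - d)) 0 = Defs.cdf g0 (- d).
Proof.
move=> [mg g0ge0 _].
have mE : measurable_fun setT (EFin \o g0) by exact/measurable_EFinP.
have mphi : measurable_fun [set: measurableTypeR R] ((fun x : R => x + - d) : measurableTypeR R -> measurableTypeR R).
  by apply: measurable_funD.
rewrite /Defs.cdf.
transitivity (\int[pushforward mu ((fun x : R => (x + - d)%R) : measurableTypeR R -> measurableTypeR R)]_(y in `]-oo, (- d)%R]) (g0 y)%:E)%E; last first.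
  by apply: eq_measure_integral => A mA _; exact: (lebesgue_measure_shift (- d) A mA).
rewrite (@ge0_integral_pushforward _ _ _ _ R _ mphi mu)//=; last 2 first.
- exact: measurable_funS mE.
- by move=> x _; rewrite lee_fin.
congr (integral _ _ _).
by apply/seteqP; split => x /=; rewrite !in_itv/= lerBlDr addrC subrr.
Qed.
End S.

Theorem corollary5 (R : realType) (X : finType) (D : {set X * X})
  (p : X -> X -> R) :
  valid_domain D -> is_SCF D p -> Fechner_rationalizable D p ->
  forall x y : X,
    (TC (RsRf D p) x y ->
       forall (u : X -> R) (g : X -> X -> R -> R),
         is_Fechnerian u g -> rationalizes D u g p -> u y <= u x) /\
    (TP (RsRf D p) x y ->
       forall (u : X -> R) (g : X -> X -> R -> R),
         is_Fechnerian u g -> rationalizes D u g p -> u y < u x).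
Proof.
move=> [Dirr _ Dsym] _ _.
have key : forall u g, is_Fechnerian u g -> rationalizes D u g p ->
    forall a b, RsRf D p a b -> u b <= u a /\ (u a = u b -> RsRf D p b a).
  move=> u g [_ [g0 [dens sympos shape]]] [_ hcdf].
  have gpos : forall v, 0 < g0 v.
    move=> v; case: (leP 0 v) => v0; first by case: (sympos v v0).
    have := sympos (- v); rewrite oppr_ge0 (ltW v0) opprK => /(_ isT) [<- //].
  have H : forall a b, (a, b) \in D -> (p b a)%:E = Defs.cdf g0 (u b - u a).
    move=> a b ab; rewrite -hcdf //.
    rewrite (_ : g a b = fun v => g0 (v - vdiff u a b)); last first.
      by apply/funext => v; apply: shape; exact: Dirr.
    by rewrite cdf_shift // /vdiff opprB.
  have mono : forall s t, (Defs.cdf g0 s <= Defs.cdf g0 t)%E -> s <= t.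
    move=> s t; apply: contraTT; rewrite -!ltNge => ts; exact: cdf_strict.
  move=> a b [[->|[ab le]]|[[neq nD] [z [az bz le]]]].
  - by split => //; left; left.
  - have E1 := H a b ab; have E2 := H b a (Dsym _ _ ab).
    have : (Defs.cdf g0 (u b - u a) <= Defs.cdf g0 (u a - u b))%E.
      by rewrite -E1 -E2 lee_fin.
    move/mono => h; split; first by lra.
    move=> eq; left; right; split; first exact: Dsym.
    have : (p a b)%:E = (p b a)%:E by rewrite E1 E2 eq.
    by case=> ->.
  - have E1 := H z a (Dsym _ _ az); have E2 := H z b (Dsym _ _ bz).
    have : (Defs.cdf g0 (u b - u z) <= Defs.cdf g0 (u a - u z))%E.
      by rewrite -E1 -E2 lee_fin.
    move/mono => h; split; first by lra.
    move=> eq; right; split.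
      split; first by move=> e; apply: neq; rewrite e.
      by apply/negP => ba; move: nD; rewrite (Dsym _ _ ba).
    exists z; split => //.
    have : (p a z)%:E = (p b z)%:E by rewrite E1 E2 eq.
    by case=> ->.
have part1 : forall u g, is_Fechnerian u g -> rationalizes D u g p ->
    forall a b, TC (RsRf D p) a b -> u b <= u a.
  move=> u g hF hR a b; elim=> [a' b' /(key _ _ hF hR) [] //|a' b' c' _ h1 _ h2].
  exact: le_trans h2 h1.
have part2 : forall u g, is_Fechnerian u g -> rationalizes D u g p ->
    forall a b, TC (RsRf D p) a b -> u a = u b -> TC (RsRf D p) b a.
  move=> u g hF hR a b; elim=> [a' b' /(key _ _ hF hR) [_ h] e|a' b' c' t1 h1 t2 h2 e].
    by apply: t_step; apply: h.
  have l1 := part1 _ _ hF hR _ _ t1; have l2 := part1 _ _ hF hR _ _ t2.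
  have eab : u a' = u b' by apply/eqP; rewrite eq_le l1 e l2.
  have ebc : u b' = u c' by rewrite -eab.
  exact: t_trans (h2 ebc) (h1 eab).
move=> x y; split.
  by move=> tc u g hF hR; exact: part1 hF hR _ _ tc.
move=> [tc ntc] u g hF hR; rewrite lt_neqAle (part1 _ _ hF hR _ _ tc) andbT.
by apply/eqP => e; apply: ntc; apply: (part2 _ _ hF hR _ _ tc).
Qed.
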